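(* Let $L$ be a precompact Hausdorff co-Heyting algebra, identified with its image in $\widehat L$. Then: (1) $L$ and $\widehat L$ have the same completely join irreducible elements; (2) every join irreducible element of $L$ is completely join irreducible; (3) for every $x\in\mathcal I^{!\vee}(L)$, the cofoundation rank of $x$ in the ordered set $\mathcal I^{!\vee}(L)$ is finite and equal to $\operatorname{codim}_L x$; (4) $\mathcal I^{!\vee}(L)$ satisfies the ascending chain condition; (5) for every $a\in L$, $a$ is the complete join in $L$ of the set of its join irreducible components.
   Context: A co-Heyting algebra is a bounded distributive lattice $(L,0,1,\vee,\wedge)$ such that $a-b=\min\{c\in L: a\le b\vee c\}$ exists for all $a,b$. For an ideal $I$, $L/I$ is the quotient by $a\equiv_I b\iff(a-b)\vee(b-a)\in I$. $\operatorname{Spec}L$ is the set of prime filters ordered by inclusion; height = foundation rank there; $\operatorname{codim}_La=\min\{\operatorname{height}\mathfrak p: a\in\mathfrak p\}$ ($+\infty$ if none); $dL=\{a:\operatorname{codim}_La\ge d\}$ is an ideal. $L$ is Hausdorff if every nonzero element has finite codimension; precompact if $L/dL$ is finite for every positive integer $d$. $\widehat L$ is the projective limit of the quotients $L/dL$ under the canonical surjections $L/(d+1)L\to L/dL$, and $L$ embeds in it diagonally. $x\ne0$ is join irreducible if $x\le a\vee b$ implies $x\le a$ or $x\le b$; completely join irreducible if $x\le\bigvee A$ (for any $A$ whose join exists) implies $x\le a$ for some $a\in A$; $\mathcal I^{!\vee}(L)$ is the set of completely join irreducible elements. The join irreducible components of $a$ are the maximal elements of the set of join irreducible elements below $a$.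 The cofoundation rank of $x$ in an ordered set $E$ is its foundation rank for the reverse order (rank $\ge\beta+1$ iff some strictly larger element has rank $\ge\beta$; limits by intersection). *)

(* Defs.v *)
From HB Require Import structures.
From mathcomp Require Import all_boot all_order.
Set Implicit Arguments. Unset Strict Implicit. Unset Printing Implicit Defensive.
Import Order.TTheory.
Local Open Scope order_scope.

Section Generic.
Variable T : Type.
Variable E : T -> Prop.
Variable le : T -> T -> Prop.

Definition is_lub (A : T -> Prop) (s : T) : Prop :=
  E s /\ (forall a, A a -> le a s) /\
  (forall u, E u -> (forall a, A a -> le a u) -> le s u).

Definition cji (bot : T) (x : T) : Prop :=
  E x /\ ~ le x bot /\
  forall (A : T -> Prop) (s : T), (forall a, A a -> E a) ->
    is_lub A s -> le x s -> exists a, A a /\ le x a.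

(* foundation rank w.r.t. the strict order lt on E, finite levels:
   rank_ge lt x n  <->  "rank of x >= n"
   (rank >= n+1 iff some strictly smaller element has rank >= n). *)
Fixpoint rank_ge (lt : T -> T -> Prop) (x : T) (n : nat) : Prop :=
  match n with
  | 0 => True
  | n'.+1 => exists y, E y /\ lt y x /\ rank_ge lt y n'
  end.

Definition rank_eq (lt : T -> T -> Prop) (x : T) (n : nat) : Prop :=
  rank_ge lt x n /\ ~ rank_ge lt x n.+1.
End Generic.

Section CoHeyting.
Variables (disp : Order.disp_t) (L : tbDistrLatticeType disp).

Definition is_diff (a b c : L) : Prop :=
  a <= b `|` c /\ forall c', a <= b `|` c' -> c <= c'.

Definition coHeyting : Prop := forall a b : L, exists c, is_diff a b c.

Definition cong (I : L -> Prop) (a b : L) : Prop :=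
  exists c1 c2, is_diff a b c1 /\ is_diff b a c2 /\ I (c1 `|` c2).

Definition prime_filter (p : L -> Prop) : Prop :=
  p \top /\ ~ p \bot /\
  (forall a b, p a -> a <= b -> p b) /\
  (forall a b, p a -> p b -> p (a `&` b)) /\
  (forall a b, p (a `|` b) -> p a \/ p b).

Definition sincl (q p : L -> Prop) : Prop :=
  (forall a, q a -> p a) /\ ~ (forall a, p a -> q a).

Definition height_ge (p : L -> Prop) (n : nat) : Prop :=
  rank_ge prime_filter sincl p n.

(* codim_L a >= n  (codim = min of heights of primes containing a, +oo if none) *)
Definition codim_ge (a : L) (n : nat) : Prop :=
  forall p, prime_filter p -> p a -> height_ge p n.

Definition codim_eq (a : L) (n : nat) : Prop :=
  codim_ge a n /\ ~ codim_ge a n.+1.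

Definition dL (d : nat) : L -> Prop := fun a => codim_ge a d.

Definition Hausdorff : Prop :=
  forall a : L, a != \bot -> exists n, codim_eq a n.

(* L/dL finite for every positive d: finitely many classes *)
Definition precompact : Prop :=
  forall d, 0 < d -> exists s : seq L, forall a, exists2 b, b \in s & cong (dL d) a b.

(* an element of hat L is represented by a family f, f d representing the
   class of L/dL (d > 0), compatible with the surjections L/(d+1)L -> L/dL *)
Definition hat_elt (f : nat -> L) : Prop :=
  forall d, 0 < d -> cong (dL d) (f d.+1) (f d).

(* componentwise order, the order of L/dL being [a] <= [b] iff [a `|` b] = [b] *)
Definition hat_le (f g : nat -> L) : Prop :=
  forall d, 0 < d -> cong (dL d) (f d `|` g d) (g d).

Definition hat_eq (f g : nat -> L) : Prop := hat_le f g /\ hat_le g f.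

Definition hat_of (a : L) : nat -> L := fun _ => a.

Definition Lle (x y : L) : Prop := x <= y.

Definition cjiL (x : L) : Prop := cji (fun _ => True) Lle \bot x.

Definition cjiHat (f : nat -> L) : Prop := cji hat_elt hat_le (hat_of \bot) f.

Definition join_irr (x : L) : Prop :=
  x != \bot /\ forall a b, x <= a `|` b -> x <= a \/ x <= b.

Definition ji_component (a x : L) : Prop :=
  join_irr x /\ x <= a /\
  forall y, join_irr y -> y <= a -> x <= y -> y = x.

Definition cjiL_corank_eq (x : L) (n : nat) : Prop :=
  rank_eq cjiL (fun y z => z < y) x n.

End CoHeyting.

(* Main.v *)
Require Import Defs.
From mathcomp Require Import all_boot all_order.
From Stdlib Require Import Classical ClassicalEpsilon.
From mathcomp Require classical_sets.
Import Order.TTheory.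
Local Open Scope order_scope.
Set Implicit Arguments. Unset Strict Implicit. Unset Printing Implicit Defensive.

Section Main.
Variables (disp : Order.disp_t) (L : tbDistrLatticeType disp).
Hypothesis hcoH : coHeyting L.
Implicit Types a b c e f g t x y z : L.
Implicit Types p q s u : L -> Prop.

Definition dif a b : L := proj1_sig (constructive_indefinite_description _ (hcoH a b)).
Lemma difP a b : is_diff a b (dif a b).
Proof. exact: proj2_sig (constructive_indefinite_description _ (hcoH a b)). Qed.
Lemma le_dif a b : a <= b `|` dif a b.
Proof. by case: (difP a b). Qed.
Lemma dif_min a b c : a <= b `|` c -> dif a b <= c.
Proof. by case: (difP a b) => _; apply. Qed.
Lemma is_diff_dif a b c : is_diff a b c -> c = dif a b.
Proof.
case=> h1 h2; apply/le_anti/andP; split; first exact/h2/le_dif.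
exact: dif_min.
Qed.
Lemma dif_le a b : dif a b <= a.
Proof. by apply: dif_min; rewrite leUr. Qed.
Lemma dif_eq0 a b : (dif a b = \bot) <-> (a <= b).
Proof.
split=> [h|h]; first by have := le_dif a b; rewrite h joinx0.
by apply/le_anti; rewrite le0x andbT; apply: dif_min; rewrite joinx0.
Qed.
Lemma dif_monol a a' b : a <= a' -> dif a b <= dif a' b.
Proof. by move=> h; apply: dif_min; apply: le_trans h (le_dif _ _). Qed.
Lemma dif_joinl a a' b : dif (a `|` a') b <= dif a b `|` dif a' b.
Proof.
apply: dif_min; rewrite leUx; apply/andP; split.
  by apply: le_trans (le_dif a b) _; apply: leU2 => //; rewrite leUl.
by apply: le_trans (le_dif a' b) _; apply: leU2 => //; rewrite leUr.
Qed.
Lemma dif_trans a b c : dif a c <= dif a b `|` dif b c.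
Proof.
apply: dif_min; apply: le_trans (le_dif a b) _.
rewrite leUx; apply/andP; split.
  by apply: le_trans (le_dif b c) _; apply: leU2 => //; rewrite leUr.
exact: le_trans (leUl _ (dif b c)) (leUr _ _).
Qed.
Lemma dif_bot a : dif a \bot = a.
Proof.
apply/le_anti; rewrite dif_le /=.
by have := le_dif a \bot; rewrite join0x.
Qed.
Lemma dif_self a : dif a a = \bot.
Proof. by apply/dif_eq0. Qed.
Lemma dif_jiE x b : (forall a c, x <= a `|` c -> x <= a \/ x <= c) ->
  ~ (x <= b) -> dif x b = x.
Proof.
move=> hji hb; apply/le_anti; rewrite dif_le /=.
by case: (hji _ _ (le_dif x b)).
Qed.

Lemma rank_ge_S (T : Type) (E : T -> Prop) (lt : T -> T -> Prop) n (u : T) :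
  rank_ge E lt u n.+1 -> rank_ge E lt u n.
Proof.
elim: n u => [//|n IH] u /= [y [Ey [lty hy]]].
by exists y; split=> //; split=> //; apply: IH.
Qed.
Lemma rank_ge_le (T : Type) (E : T -> Prop) (lt : T -> T -> Prop) m n (u : T) :
  (m <= n)%N -> rank_ge E lt u n -> rank_ge E lt u m.
Proof.
move=> /subnK <-; elim: (n - m)%N => [//|k IH] h.
by apply: IH; apply: rank_ge_S; rewrite addSn in h.
Qed.

Lemma height_mono (p q : L -> Prop) n :
  (forall a, q a -> p a) -> height_ge q n -> height_ge p n.
Proof.
case: n => [//|n] hqp /= [y [py [[hyq hnq] hy]]].
exists y; split=> //; split=> //; split; first by move=> a /hyq /hqp.
by move=> hpy; apply: hnq => a /hqp /hpy.
Qed.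
Lemma height_strict (p q : L -> Prop) n :
  prime_filter q -> sincl q p -> height_ge q n -> height_ge p n.+1.
Proof. by move=> pq sq hq; exists q. Qed.

Lemma codim_ge_S a n : codim_ge a n.+1 -> codim_ge a n.
Proof. by move=> h p pp pa; apply: rank_ge_S; apply: h. Qed.
Lemma codim_ge_le a m n : (m <= n)%N -> codim_ge a n -> codim_ge a m.
Proof. by move=> mn h p pp pa; apply: rank_ge_le mn _; apply: h. Qed.
Lemma codim_ge_anti a b n : a <= b -> codim_ge b n -> codim_ge a n.
Proof.
move=> ab h p pp pa; apply: h => //.
by case: pp => _ [_ [hup _]]; apply: hup pa ab.
Qed.
Lemma codim_ge_join a b n : codim_ge a n -> codim_ge b n -> codim_ge (a `|` b) n.
Proof.
move=> ha hb p pp pab; case: (pp) => _ [_ [_ [_ hj]]].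
by case: (hj _ _ pab) => h; [apply: ha | apply: hb].
Qed.
Lemma codim_ge_bot n : codim_ge (\bot : L) n.
Proof. by move=> p [_ [hb _]]. Qed.

Lemma pf_top p : prime_filter p -> p \top.  Proof. by case. Qed.
Lemma pf_bot p : prime_filter p -> ~ p \bot.  Proof. by case=> _ []. Qed.
Lemma pf_up p a b : prime_filter p -> p a -> a <= b -> p b.
Proof. by case=> _ [_ [h _]]; apply: h. Qed.
Lemma pf_meet p a b : prime_filter p -> p a -> p b -> p (a `&` b).
Proof. by case=> _ [_ [_ [h _]]]; apply: h. Qed.
Lemma pf_join p a b : prime_filter p -> p (a `|` b) -> p a \/ p b.
Proof. by case=> _ [_ [_ [_ h]]]; apply: h. Qed.
Lemma pf_joinN p a b : prime_filter p -> ~ p a -> ~ p b -> ~ p (a `|` b).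
Proof. by move=> pp ha hb /(pf_join pp) []. Qed.
Lemma pf_dif p a b : prime_filter p -> p a -> ~ p b -> p (dif a b).
Proof.
move=> pp pa nb; have := pf_up pp pa (le_dif a b).
by case/(pf_join pp).
Qed.

Lemma pf_class p k a b : prime_filter p -> ~ height_ge p k ->
  codim_ge (dif a b) k -> p a -> p b.
Proof.
move=> pp hk hc pa; have := pf_up pp pa (le_dif a b).
case/(pf_join pp) => // hd; exfalso; apply: hk; exact: hc.
Qed.

Definition up x : L -> Prop := fun a => x <= a.

Lemma ji_prime x : join_irr x -> prime_filter (up x).
Proof.
case=> hx hj; split; first exact: lex1.
split; first by rewrite /up lex0; apply/negP.
split; first by move=> a b; apply: le_trans.
split; first by move=> a b ha hb; rewrite /up lexI ha hb.
by move=> a b; apply: hj.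
Qed.
Lemma prime_ji p x : prime_filter p -> (forall a, p a <-> x <= a) -> join_irr x.
Proof.
move=> pp hx; split.
  by apply/eqP => x0; apply: (pf_bot pp); apply/hx; rewrite x0.
move=> a b /hx /(pf_join pp) [] /hx; tauto.
Qed.
Lemma codim_up x n : join_irr x -> (codim_ge x n <-> height_ge (up x) n).
Proof.
move=> hx; split; first by move=> h; apply: h; [exact: ji_prime | exact: lexx].
move=> h p pp px; apply: height_mono h => a xa; exact: pf_up pp px xa.
Qed.


Definition efilt e (I : L -> Prop) (G : L -> Prop) : Prop :=
  (forall a b, G a -> a <= b -> G b) /\ (forall a b, G a -> G b -> G (a `&` b)) /\
  (forall g, G g -> ~ I (e `&` g)).

Lemma pft e (I : L -> Prop) :
  (forall a b, I b -> a <= b -> I a) -> (forall a b, I a -> I b -> I (a `|` b)) ->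
  I \bot -> ~ I e ->
  exists M, prime_filter M /\ M e /\ forall a, M a -> ~ I a.
Proof.
move=> Idown Ijoin Ibot Ie.
have [M [PM Mmax]] : exists A, efilt e I A /\
    (forall B, classical_sets.proper A B -> ~ efilt e I B).
  apply: classical_sets.Zorn_bigcup.
  move=> F FP Ftot; split; last split.
  - by move=> a b [X FX Xa] ab; exists X => //; case: (FP X FX) => h _; apply: h Xa ab.
  - move=> a b [X FX Xa] [Y FY Yb]; case: (Ftot X Y FX FY) => sub.
      exists Y => //; case: (FP Y FY) => _ [h _]; apply: h => //; exact: sub.
    exists X => //; case: (FP X FX) => _ [h _]; apply: h => //; exact: sub.
  - by move=> g [X FX Xg]; case: (FP X FX) => _ [_ h]; apply: h.
case: (PM) => Mup [Mmeet MI].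
pose M' := fun c => e <= c \/ exists g, M g /\ e `&` g <= c.
have MM' : forall a, M a -> M' a by move=> a Ma; right; exists a; split=> //; exact: leIr.
have PM' : efilt e I M'.
  split; last split.
  - move=> a b [ea|[g [Mg ga]]] ab; first by left; apply: le_trans ea ab.
    by right; exists g; split=> //; apply: le_trans ga ab.
  - move=> a b [ea|[g [Mg ga]]] [eb|[g' [Mg' gb]]].
    + by left; rewrite lexI ea eb.
    + right; exists g'; split=> //; rewrite lexI gb andbT.
      by apply: le_trans ea; exact: leIl.
    + right; exists g; split=> //; rewrite lexI ga /=.
      by apply: le_trans eb; exact: leIl.
    + right; exists (g `&` g'); split; first exact: Mmeet.
      rewrite lexI; apply/andP; split.
        by apply: le_trans ga; apply: leI2 => //; exact: leIl.
      by apply: le_trans gb; apply: leI2 => //; exact: leIr.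
  - move=> c [ec|[g [Mg gc]]] Iec.
      by apply: Ie; apply: Idown Iec _; rewrite lexI lexx ec.
    apply: (MI g Mg); apply: Idown Iec _; rewrite lexI leIl /=; exact: gc.
have M'M : forall a, M' a -> M a.
  move=> a M'a; apply: NNPP => nMa; apply: (Mmax M') => //; split; first exact: MM'.
  by move=> h; apply: nMa; apply: h.
have Me : M e by apply: M'M; left.
have MnI : forall a, M a -> ~ I a.
  by move=> a Ma Ia; apply: (MI a Ma); apply: Idown Ia _; exact: leIr.
have Mtop : M \top by apply: Mup Me (lex1 _).
have extend : forall a, ~ M a -> exists g, M g /\ I (e `&` (g `&` a)).
  move=> a nMa; pose Ma := fun c => exists g, M g /\ g `&` a <= c.
  have : ~ efilt e I Ma.
    apply: Mmax; split; first by move=> c Mc; exists c; split=> //; exact: leIl.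
    move=> h; apply: nMa; apply: h; exists \top; split=> //; exact: leIr.
  move=> nP; apply: NNPP => hno; apply: nP; split; last split.
  - by move=> c d [g [Mg gc]] cd; exists g; split=> //; apply: le_trans gc cd.
  - move=> c d [g [Mg gc]] [g' [Mg' gd]]; exists (g `&` g'); split; first exact: Mmeet.
    rewrite lexI; apply/andP; split.
      by apply: le_trans gc; apply: leI2 => //; exact: leIl.
    by apply: le_trans gd; apply: leI2 => //; exact: leIr.
  - move=> c [g [Mg gc]] Iec; apply: hno; exists g; split=> //.
    by apply: Idown Iec _; apply: leI2.
exists M; split; last by split.
split=> //; split; first by move=> h; exact: (MnI _ h Ibot).
split=> //; split=> //.
move=> a b Mab; apply: NNPP => hn.
have na : ~ M a by move=> h; apply: hn; left.
have nb : ~ M b by move=> h; apply: hn; right.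
have [g1 [Mg1 I1]] := extend a na.
have [g2 [Mg2 I2]] := extend b nb.
have Mg : M (g1 `&` g2 `&` (a `|` b)) by apply: (Mmeet) => //; exact: (Mmeet).
apply: (MI _ Mg); apply: Idown (Ijoin _ _ I1 I2) _.
rewrite [g1 `&` g2 `&` _]meetUr meetUr; apply: leU2; apply: leI2 => //;
  apply: leI2 => //; [exact: leIl | exact: leIr].
Qed.



Lemma esakia s e f : prime_filter s -> s (dif e f) ->
  exists s', prime_filter s' /\ (forall a, s' a -> s a) /\ s' e /\ ~ s' f.
Proof.
move=> ps sd.
pose I := fun c => exists t, ~ s t /\ c <= t `|` f.
have [M [pM [Me MI]]] : exists M, prime_filter M /\ M e /\ forall a, M a -> ~ I a.
  apply: pft.
  - by move=> a b [t [nt bt]] ab; exists t; split=> //; apply: le_trans ab bt.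
  - move=> a b [t [nt at_]] [t' [nt' bt']]; exists (t `|` t'); split.
      exact: pf_joinN.
    rewrite leUx; apply/andP; split.
      by apply: le_trans at_ _; apply: leU2 => //; exact: leUl.
    by apply: le_trans bt' _; apply: leU2 => //; exact: leUr.
  - by exists \bot; split; [exact: pf_bot | exact: le0x].
  - move=> [t [nt et]]; apply: nt; apply: pf_up ps sd _.
    by apply: dif_min; rewrite joinC.
exists M; split=> //; split.
  by move=> a Ma; apply: NNPP => nsa; apply: (MI a Ma); exists a; split=> //; exact: leUl.
split=> // Mf; apply: (MI f Mf); exists \bot; split; [exact: pf_bot | exact: leUr].
Qed.

Hypothesis hH : Hausdorff L.
Hypothesis hP : precompact L.

Lemma fin_prime g : g != \bot ->
  exists s, prime_filter s /\ s g /\ exists N, ~ height_ge s N.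
Proof.
move=> /hH [n [_ hn]]; apply: NNPP => hno; apply: hn => p pp pg.
apply: NNPP => hp; apply: hno; exists p; split=> //; split=> //; by exists n.+1.
Qed.

Lemma HP4 e f : ~ (e <= f) ->
  exists s, prime_filter s /\ s e /\ ~ s f /\ exists N, ~ height_ge s N.
Proof.
move=> ef; have : dif e f != \bot by apply/eqP => /dif_eq0.
case/fin_prime => s [ps [sd [N hN]]].
have [s' [ps' [ss' [s'e s'f]]]] := esakia ps sd.
exists s'; split=> //; split=> //; split=> //; exists N => h; apply: hN.
exact: height_mono h.
Qed.

Lemma all_codim_bot a : (forall d, (0 < d)%N -> codim_ge a d) -> a = \bot.
Proof.
move=> h; apply: NNPP => /eqP /hH [n [_ hn]]; apply: hn; exact: h.
Qed.

Lemma exact_below s h N : prime_filter s -> ~ height_ge s N -> height_ge s h.+1 ->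
  exists u, prime_filter u /\ (forall a, u a -> s a) /\ height_ge u h.+1 /\
    ~ height_ge u h.+2.
Proof.
elim: N s => [|N IH] s ps hN hs; first by exfalso; apply: hN.
case: (classic (height_ge s h.+2)) => hs2; last by exists s.
case: hs2 => y [py [[ys nys] hy]].
have hyN : ~ height_ge y N by move=> hyN; apply: hN; exists y.
have [u [pu [uy hu]]] := IH y py hyN hy.
by exists u; split=> //; split=> // a /uy /ys.
Qed.

Lemma cong_dif d a b : cong (dL d) a b -> codim_ge (dif a b) d /\ codim_ge (dif b a) d.
Proof.
case=> c1 [c2 [h1 [h2 h]]]; rewrite -(is_diff_dif h1) -(is_diff_dif h2).
by split; apply: codim_ge_anti h; [exact: leUl | exact: leUr].
Qed.
Lemma dif_cong d a b : codim_ge (dif a b) d -> codim_ge (dif b a) d -> cong (dL d) a b.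
Proof.
move=> h1 h2; exists (dif a b), (dif b a); split; first exact: difP.
split; first exact: difP.
exact: codim_ge_join.
Qed.

Lemma classes d : (0 < d)%N -> exists S : seq L, forall a, exists b,
  b \in S /\ codim_ge (dif a b) d /\ codim_ge (dif b a) d.
Proof.
move=> /hP [S hS]; exists S => a; have [b bS hab] := hS a.
by exists b; split=> //; apply: cong_dif.
Qed.

Lemma list_meet p (S : seq L) : prime_filter p ->
  exists e, p e /\ forall b, b \in S -> p b -> e <= b.
Proof.
move=> pp; elim: S => [|b S [e [pe he]]]; first by exists \top; split=> //; exact: pf_top.
case: (classic (p b)) => pb.
  exists (e `&` b); split; first exact: pf_meet.
  move=> b'; rewrite in_cons => /orP [/eqP -> _|b'S pb']; first exact: leIr.
  by apply: le_trans (leIl _ _) _; apply: he.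
exists e; split=> // b'; rewrite in_cons => /orP [/eqP -> //|b'S pb'].
exact: he.
Qed.

Lemma list_join p (S : seq L) : prime_filter p ->
  exists t, ~ p t /\ forall b, b \in S -> ~ p b -> b <= t.
Proof.
move=> pp; elim: S => [|b S [t [pt ht]]]; first by exists \bot; split=> //; exact: pf_bot.
case: (classic (p b)) => pb.
  exists t; split=> // b'; rewrite in_cons => /orP [/eqP -> //|b'S pb'].
  exact: ht.
exists (t `|` b); split; first exact: pf_joinN.
move=> b'; rewrite in_cons => /orP [/eqP -> _|b'S pb']; first exact: leUr.
by apply: le_trans (ht _ b'S pb') _; exact: leUl.
Qed.


Lemma height_notS q n : ~ height_ge q n -> ~ height_ge q n.+1.
Proof. by move=> h h1; apply: h; apply: rank_ge_S h1. Qed.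

Lemma pfh p N : prime_filter p -> ~ height_ge p N -> exists x, forall a, p a <-> x <= a.
Proof.
case: N => [|h] pp hN; first by exfalso; apply: hN.
have hN2 := height_notS hN.
have [S hS] := @classes h.+2 isT.
have [e [pe he]] := list_meet S pp.
have [t [pt ht]] := list_join S pp.
exists (dif e t) => c; split; last by apply: pf_up pp (pf_dif pp pe pt).
move=> pc; apply: NNPP => nxc.
have net : ~ (e <= t `|` c) by move=> h1; apply: nxc; apply: dif_min.
have [s' [ps' [s'e [s'tc [N' hN']]]]] := HP4 net.
have s't : ~ s' t by move=> h1; apply: s'tc; apply: pf_up ps' h1 (leUl _ _).
have s'c : ~ s' c by move=> h1; apply: s'tc; apply: pf_up ps' h1 (leUr _ _).
case: (classic (height_ge s' h.+1)) => hs'.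
  have [u [pu [us' [hu1 hu2]]]] := exact_below ps' hN' hs'.
  have : ~ (forall a, u a -> p a) by move=> sub; apply: hN; apply: height_mono sub hu1.
  move=> /not_all_ex_not [a hna]; have [ua npa] := imply_to_and _ _ hna.
  have [b [bS [hab hba]]] := hS a.
  have ub : u b by apply: pf_class pu hu2 hab ua.
  have npb : ~ p b by move=> pb; apply: npa; apply: pf_class pp hN2 hba pb.
  by apply: s't; apply: us'; apply: pf_up pu ub (ht b bS npb).
have hs'2 := height_notS hs'.
apply: s'c; have [b [bS [hcb hbc]]] := hS c.
have pb : p b by apply: pf_class pp hN2 hcb pc.
have s'b : s' b by apply: pf_up ps' s'e (he b bS pb).
exact: pf_class ps' hs'2 hbc s'b.
Qed.

Lemma T_lemma x h : join_irr x -> ~ codim_ge x h.+1 ->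
  exists t, ~ (x <= t) /\ (forall c, ~ (x <= c) -> c <= t) /\
   (forall q, prime_filter q -> (exists N, ~ height_ge q N) -> ~ q t ->
      forall a, q a -> x <= a).
Proof.
move=> jx hx; have pp := ji_prime jx.
have hN : ~ height_ge (up x) h.+1 by move=> h1; apply: hx; apply/codim_up.
have hN2 := height_notS hN.
have [S hS] := @classes h.+2 isT.
have [t [pt ht]] := list_join S pp.
have Tq : forall q, prime_filter q -> (exists N, ~ height_ge q N) -> ~ q t ->
      forall a, q a -> x <= a.
  move=> q pq [N hqN] qt a qa; apply: NNPP => nxa.
  have [u [pu [uq [hu [a' [ua' npa']]]]]] : exists u, prime_filter u /\
     (forall a, u a -> q a) /\ ~ height_ge u h.+2 /\ exists a', u a' /\ ~ up x a'.
    case: (classic (height_ge q h.+1)) => hq1.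
      have [u [pu [uq [hu1 hu2]]]] := exact_below pq hqN hq1.
      have : ~ (forall a, u a -> up x a).
        by move=> sub; apply: hN; apply: height_mono sub hu1.
      move=> /not_all_ex_not [a' hna]; have [ua' npa'] := imply_to_and _ _ hna.
      by exists u; split=> //; split=> //; split=> //; exists a'.
    by exists q; split=> //; split=> //; split; [exact: height_notS | exists a].
  have [b [bS [hab hba]]] := hS a'.
  have ub : u b by apply: pf_class pu hu hab ua'.
  have npb : ~ up x b by move=> pb; apply: npa'; apply: pf_class pp hN2 hba pb.
  by apply: qt; apply: uq; apply: pf_up pu ub (ht b bS npb).
exists t; split=> //; split=> // c nxc; apply: NNPP => nct.
have [s' [ps' [s'c [s't hfin]]]] := HP4 nct.
by apply: nxc; apply: Tq ps' hfin s't c s'c.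
Qed.


Lemma ji_nz x : join_irr x -> x != \bot.  Proof. by case. Qed.

Lemma codim_eq_uniq a n m : codim_eq a n -> codim_eq a m -> n = m.
Proof.
move=> [hn nn] [hm nm]; apply/eqP; rewrite eqn_leq; apply/andP; split;
  rewrite leqNgt; apply/negP => lt; [apply: nm; exact: codim_ge_le lt hn |
  apply: nn; exact: codim_ge_le lt hm].
Qed.

Lemma up_sincl x y : x < y -> sincl (up y) (up x).
Proof.
move=> xy; split; first by move=> a; apply: le_trans (ltW xy).
by move=> h; move: (h x (lexx x)); rewrite /up => yx; move: xy; rewrite lt_neqAle => /andP [/eqP ne xy']; apply: ne; apply/le_anti; rewrite xy' yx.
Qed.

Lemma ji_codim_lt y y' n n' : join_irr y -> join_irr y' -> y < y' ->
  codim_eq y n -> codim_eq y' n' -> (n' < n)%N.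
Proof.
move=> jy jy' lt [_ hn] [hn' _]; rewrite ltnNge; apply/negP => le.
apply: hn; apply: (@codim_ge_le _ _ n'.+1); first by rewrite ltnS.
apply/codim_up => //.
apply: height_strict (ji_prime jy') (up_sincl lt) _; exact/codim_up.
Qed.

Lemma ji_max (P : L -> Prop) z : (forall y, P y -> join_irr y) -> P z ->
  exists x, P x /\ forall y, P y -> ~ (x < y).
Proof.
move=> Pji Pz; have [m hm] := hH (ji_nz (Pji z Pz)).
suff : forall n y, P y -> forall k, (k <= n)%N -> codim_eq y k ->
  exists x, P x /\ forall y, P y -> ~ (x < y) by move/(_ m z Pz m (leqnn m) hm).
elim=> [|n IH] y Py k kn hk; case: (classic (forall y', P y' -> ~ (y < y'))) => hy;
  try by exists y.
- move: hy => /not_all_ex_not [y' hy']; have [Py' /NNPP lt] := imply_to_and _ _ hy'.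
  have [k' hk'] := hH (ji_nz (Pji y' Py')).
  have lt' := ji_codim_lt (Pji y Py) (Pji y' Py') lt hk hk'.
  by move: kn lt'; rewrite leqn0 => /eqP ->.
- move: hy => /not_all_ex_not [y' hy']; have [Py' /NNPP lt] := imply_to_and _ _ hy'.
  have [k' hk'] := hH (ji_nz (Pji y' Py')).
  have := ji_codim_lt (Pji y Py) (Pji y' Py') lt hk hk' => lt'.
  apply: (IH y' Py' k') hk'; rewrite -ltnS; exact: leq_trans lt' kn.
Qed.

Lemma ji_of_cji x : cjiL x -> join_irr x.
Proof.
case=> _ [hx hc]; split; first by apply/eqP => x0; apply: hx; rewrite x0 /Lle.
move=> a b xab.
have := hc (fun z => z = a \/ z = b) (a `|` b) (fun _ _ => I).
case.
- split=> //; split; first by move=> z [->|->]; [exact: leUl | exact: leUr].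
  by move=> u _ hu; rewrite /Lle leUx; apply/andP; split; apply: hu; [left|right].
- exact: xab.
by move=> z [[->|->] xz]; [left|right].
Qed.

Lemma cji_of_ji x : join_irr x -> cjiL x.
Proof.
move=> jx; have [h [_ nh]] := hH (ji_nz jx).
have [t [xt [ht _]]] := T_lemma jx nh.
split=> //; split; first by rewrite /Lle lex0; apply/negP; exact: ji_nz.
move=> A s _ [_ [sup lst]] xs; apply: NNPP => hno; apply: xt.
apply: le_trans xs _; apply: lst => // a Aa; apply: ht => xa; apply: hno.
by exists a.
Qed.

Lemma cji_iff x : cjiL x <-> join_irr x.
Proof. by split; [exact: ji_of_cji | exact: cji_of_ji]. Qed.

Lemma exists_ji_below a v : ~ (a <= v) ->
  exists z, join_irr z /\ z <= a /\ ~ (z <= v).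
Proof.
move=> av; have [s [ps [sa [sv [N hN]]]]] := HP4 av.
have [z hz] := pfh ps hN; exists z; split; first exact: prime_ji ps hz.
by split; [apply/hz | move/hz].
Qed.


Lemma rank_codim n : forall x, join_irr x ->
  (rank_ge (@cjiL _ L) (fun y z => z < y) x n <-> codim_ge x n).
Proof.
elim: n => [|n IH] x jx; first by split=> // _ p _ _.
split.
  move=> [y [cy [xy hy]]]; have jy := ji_of_cji cy.
  have := (IH y jy).1 hy => /(codim_up _ jy) hy'.
  apply/(codim_up _ jx); exact: height_strict (ji_prime jy) (up_sincl xy) hy'.
move=> /(codim_up _ jx) [q [pq [[qx nxq] hq]]].
have [h [_ nh]] := hH (ji_nz jx).
have nqh : ~ height_ge q h.
  by move=> hq'; apply: nh; apply/(codim_up _ jx); exists q.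
have [y hy] := pfh pq nqh.
have jy := prime_ji pq hy.
have xy : x < y.
  rewrite lt_neqAle; apply/andP; split; last by apply: qx; apply/hy.
  apply/eqP => exy; apply: nxq => a xa; apply/hy; by rewrite -exy.
exists y; split; first exact: cji_of_ji.
split=> //; apply/(IH y jy); apply/(codim_up _ jy).
by apply: height_mono hq => a /hy.
Qed.

Lemma part3 x : cjiL x -> exists n, cjiL_corank_eq x n /\ codim_eq x n.
Proof.
move=> cx; have jx := ji_of_cji cx; have [n hn] := hH (ji_nz jx).
exists n; split=> //; case: hn => h1 h2; split.
  by apply/(rank_codim _ jx).
by move/(rank_codim _ jx).
Qed.

Lemma part4 : ~ (exists u : nat -> L, (forall n, cjiL (u n)) /\ (forall n, u n < u n.+1)).
Proof.
move=> [u [cu lu]]; have ju n := ji_of_cji (cu n).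
have [K hK] := hH (ji_nz (ju 0%N)).
suff : forall n k, codim_eq (u n) k -> (k + n <= K)%N.
  have [k hk] := hH (ji_nz (ju K.+1)).
  by move=> /(_ _ _ hk); rewrite addnS ltnNge leq_addl.
elim=> [|n IH] k hk; first by rewrite addn0 (codim_eq_uniq hk hK).
have [k' hk'] := hH (ji_nz (ju n)).
have lt := ji_codim_lt (ju n) (ju n.+1) (lu n) hk' hk.
by apply: leq_trans (IH _ hk'); rewrite addnS -addSn leq_add2r.
Qed.

Lemma part5 a : is_lub (fun _ => True) (@Lle _ L) (ji_component a) a.
Proof.
split=> //; split; first by move=> c [_ [ca _]].
move=> v _ hv; apply: NNPP => av.
have [z [jz [za zv]]] := exists_ji_below av.
have [x [[jx [zx xa]] hmax]] := @ji_max (fun y => join_irr y /\ z <= y /\ y <= a) z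
  (fun y h => h.1) (conj jz (conj (lexx z) za)).
have cx : ji_component a x.
  split=> //; split=> // y jy ya xy; apply/eqP; apply: NNPP => ne.
  apply: (hmax y); first by split=> //; split=> //; apply: le_trans zx xy.
  by rewrite lt_neqAle xy andbT eq_sym; apply/negP.
by apply: zv; apply: le_trans zx (hv x cx).
Qed.


Lemma hat_leP (f g : nat -> L) :
  hat_le f g <-> forall d, (0 < d)%N -> codim_ge (dif (f d) (g d)) d.
Proof.
split=> h d d0.
  have [h1 _] := cong_dif (h d d0).
  by apply: codim_ge_anti h1; apply: dif_monol; exact: leUl.
apply: dif_cong.
  apply: codim_ge_anti (dif_joinl _ _ _) _; apply: codim_ge_join; first exact: h.
  by rewrite dif_self; exact: codim_ge_bot.
have -> : dif (g d) (f d `|` g d) = \bot by apply/dif_eq0; exact: leUr.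
exact: codim_ge_bot.
Qed.

Lemma hat_eltP (f : nat -> L) : hat_elt f <-> forall d, (0 < d)%N ->
  codim_ge (dif (f d.+1) (f d)) d /\ codim_ge (dif (f d) (f d.+1)) d.
Proof.
split=> h d d0; first exact: cong_dif (h d d0).
by case: (h d d0) => h1 h2; apply: dif_cong.
Qed.

Lemma hat_le_trans (f g k : nat -> L) : hat_le f g -> hat_le g k -> hat_le f k.
Proof.
move=> /hat_leP h1 /hat_leP h2; apply/hat_leP => d d0.
apply: codim_ge_anti (dif_trans _ (g d) _) _; apply: codim_ge_join; [exact: h1|exact: h2].
Qed.

Lemma hat_of_elt a : hat_elt (hat_of a).
Proof. by apply/hat_eltP => d _; rewrite /hat_of dif_self; split; exact: codim_ge_bot. Qed.

Lemma hat_le_diag a b : hat_le (hat_of a) (hat_of b) <-> a <= b.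
Proof.
split; last by move=> ab; apply/hat_leP => d _; rewrite /hat_of (proj2 (dif_eq0 _ _) ab);
  exact: codim_ge_bot.
move/hat_leP => h; apply/dif_eq0; apply: all_codim_bot => d d0; exact: h.
Qed.

Lemma hat_lub2 a b : is_lub (@hat_elt _ L) (@hat_le _ L)
  (fun g : nat -> L => g = hat_of a \/ g = hat_of b) (hat_of (a `|` b)).
Proof.
split; first exact: hat_of_elt.
split; first by move=> g [->|->]; apply/hat_le_diag; [exact: leUl | exact: leUr].
move=> u _ hu; have /hat_leP ha := hu _ (or_introl erefl).
have /hat_leP hb := hu _ (or_intror erefl).
apply/hat_leP => d d0; apply: codim_ge_anti (dif_joinl _ _ _) _.
by apply: codim_ge_join; [exact: ha | exact: hb].
Qed.

Lemma HC q k (f : nat -> L) : prime_filter q -> ~ height_ge q k -> hat_elt f ->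
  (0 < k)%N -> forall i, q (f (k + i)%N) <-> q (f k).
Proof.
move=> pq hk /hat_eltP hf k0; elim=> [|i IH]; first by rewrite addn0.
rewrite -IH addnS.
have d0 : (0 < k + i)%N by rewrite (leq_trans k0) // leq_addr.
have hki : ~ height_ge q (k + i) by move=> h; apply: hk; apply: rank_ge_le h; exact: leq_addr.
have [h1 h2] := hf _ d0.
by split; apply: pf_class pq hki _; [exact: h1 | exact: h2].
Qed.

Lemma hat_le_of x h (f : nat -> L) : join_irr x -> codim_eq x h -> hat_elt f ->
  (hat_le (hat_of x) f <-> x <= f h.+1).
Proof.
move=> jx [hx nhx] hf; split.
  move/hat_leP => /(_ h.+1 isT); rewrite /hat_of => hd; apply: NNPP => nx.
  by apply: nhx; rewrite -(dif_jiE (proj2 jx) nx).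
move=> xf; apply/hat_leP => d d0; rewrite /hat_of.
case: (leqP d h) => dh.
  by apply: codim_ge_anti (dif_le _ _) _; exact: codim_ge_le dh hx.
have nup : ~ height_ge (up x) h.+1 by move=> hh; apply: nhx; apply/codim_up.
have := HC (ji_prime jx) nup hf isT (d - h.+1); rewrite subnKC // => e.
by rewrite (proj2 (dif_eq0 _ _) (e.2 xf)); exact: codim_ge_bot.
Qed.


Lemma Zmem (f : nat -> L) y d : hat_elt f -> join_irr y -> ~ codim_ge y d -> (0 < d)%N ->
  y <= f d -> hat_le (hat_of y) f.
Proof.
move=> hf jy nyd d0 yfd; have [h hh] := hH (ji_nz jy).
apply/(hat_le_of jy hh hf).
have nupd : ~ height_ge (up y) d by move=> hu; apply: nyd; apply/codim_up.
have nuph : ~ height_ge (up y) h.+1 by move=> hu; apply: (proj2 hh); apply/codim_up.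
have e1 := HC (ji_prime jy) nupd hf d0 h.+1.
have e2 := HC (ji_prime jy) nuph hf isT d.
by apply/e2; rewrite addnC; apply/e1.
Qed.

Lemma part1a_l x : cjiHat (hat_of x) -> cjiL x.
Proof.
move=> [_ [nb hc]]; apply: cji_of_ji; split.
  by apply/eqP => x0; apply: nb; apply/hat_le_diag; rewrite x0.
move=> a b xab.
have [g [[->|->] hg]] := hc (fun g : nat -> L => g = hat_of a \/ g = hat_of b) (hat_of (a `|` b))
  (fun (g : nat -> L) hg => ltac:(case: hg => ->; exact: hat_of_elt)) (hat_lub2 a b)
  (proj2 (hat_le_diag _ _) xab).
  by left; apply/hat_le_diag.
by right; apply/hat_le_diag.
Qed.

Lemma part1a_r x : cjiL x -> cjiHat (hat_of x).
Proof.
move=> cx; have jx := ji_of_cji cx; have [h hh] := hH (ji_nz jx).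
have [t [xt [ht Tq]]] := T_lemma jx (proj2 hh).
split; first exact: hat_of_elt.
split.
  by move/hat_le_diag; rewrite lex0 => /eqP x0; move: (ji_nz jx); rewrite x0 eqxx.
move=> A s hA [_ [sup lst]] xs; apply: NNPP => hno.
have key : forall f : nat -> L, A f -> hat_le f (hat_of t).
  move=> f Af; have hf := hA f Af.
  have nxf : ~ hat_le (hat_of x) f by move=> h1; apply: hno; exists f.
  apply/hat_leP => d d0 q pq qd; apply: NNPP => hn.
  have [q' [pq' [q'q [q'f q't]]]] := esakia pq qd.
  have hq'd : ~ height_ge q' d by move=> h1; apply: hn; apply: height_mono h1.
  have e1 := HC pq' hq'd hf d0 h.+1.
  have xf := Tq q' pq' (ex_intro _ d hq'd) q't _ ((proj2 e1) q'f).
  have nup : ~ height_ge (up x) h.+1 by move=> hu; apply: (proj2 hh); apply/codim_up.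
  have e2 := HC (ji_prime jx) nup hf isT d.
  by apply: nxf; apply/(hat_le_of jx hh hf); apply/e2; rewrite addnC.
have st : hat_le s (hat_of t) by apply: lst; [exact: hat_of_elt | exact: key].
by apply: xt; apply/hat_le_diag; apply: hat_le_trans xs st.
Qed.

Lemma part1b (f : nat -> L) : cjiHat f -> exists x, cjiL x /\ hat_eq f (hat_of x).
Proof.
move=> [hf [nfb hc]].
have [d [d0 nd]] : exists d, (0 < d)%N /\ ~ codim_ge (f d) d.
  apply: NNPP => hno; apply: nfb; apply/hat_leP => d d0; rewrite /hat_of dif_bot.
  by apply: NNPP => hn; apply: hno; exists d.
have [q [pq [qf hq]]] : exists q, prime_filter q /\ q (f d) /\ ~ height_ge q d.
  apply: NNPP => hno; apply: nd => q pq qf; apply: NNPP => hn; apply: hno; by exists q.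
have [z hz] := pfh pq hq; have jz := prime_ji pq hz.
have Zz : join_irr z /\ hat_le (hat_of z) f.
  split=> //; apply: (Zmem hf jz _ d0); last exact/hz.
  move/(codim_up _ jz) => h1; apply: hq; apply: height_mono h1 => a ha; apply/hz; exact: ha.
have [x [[jx hxf] hmax]] := @ji_max (fun y => join_irr y /\ hat_le (hat_of y) f) z
  (fun y h => h.1) Zz.
have [h hh] := hH (ji_nz jx).
have [t [xt [ht Tq]]] := T_lemma jx (proj2 hh).
have fxt : hat_le f (hat_of (x `|` t)).
  apply/hat_leP => d' d'0 q0 pq0 qd; apply: NNPP => hn.
  have [q' [pq' [q'q [q'f q'xt]]]] := esakia pq0 qd.
  have q'x : ~ q' x by move=> h1; apply: q'xt; apply: pf_up pq' h1 (leUl _ _).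
  have q't : ~ q' t by move=> h1; apply: q'xt; apply: pf_up pq' h1 (leUr _ _).
  have hq'd : ~ height_ge q' d' by move=> h1; apply: hn; apply: height_mono h1.
  have [y hy] := pfh pq' hq'd; have jy := prime_ji pq' hy.
  have xy : x <= y := Tq q' pq' (ex_intro _ d' hq'd) q't y ((proj2 (hy y)) (lexx y)).
  apply: (hmax y).
    split=> //; apply: (Zmem hf jy _ d'0); last exact/hy.
    move/(codim_up _ jy) => h1; apply: hq'd; apply: height_mono h1 => a ha; apply/hy; exact: ha.
  rewrite lt_neqAle xy andbT; apply/eqP => exy; apply: q'x; apply/hy; by rewrite exy.
have [g [[->|->] hg]] := hc (fun g : nat -> L => g = hat_of x \/ g = hat_of t) (hat_of (x `|` t))
  (fun (g : nat -> L) hg => ltac:(case: hg => ->; exact: hat_of_elt)) (hat_lub2 x t) fxt.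
  by exists x; split; [exact: cji_of_ji | split].
by exfalso; apply: xt; apply/hat_le_diag; apply: hat_le_trans hxf hg.
Qed.

End Main.

Theorem proposition6p6 (disp : Order.disp_t) (L : tbDistrLatticeType disp)
  (hcoH : coHeyting L) (hH : Hausdorff L) (hP : precompact L) :
  (* (1) L and hat L have the same completely join irreducible elements *)
  ((forall x : L, cjiL x <-> cjiHat (hat_of x)) /\
   (forall f : nat -> L, cjiHat f -> exists x : L, cjiL x /\ hat_eq f (hat_of x))) /\
  (* (2) join irreducible implies completely join irreducible *)
  (forall x : L, join_irr x -> cjiL x) /\
  (* (3) cofoundation rank in I^{!v}(L) is finite and equals codim *)
  (forall x : L, cjiL x -> exists n : nat, cjiL_corank_eq x n /\ codim_eq x n) /\
  (* (4) ascending chain condition on I^{!v}(L) *)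
  ~ (exists u : nat -> L, (forall n, cjiL (u n)) /\ (forall n, u n < u n.+1)) /\
  (* (5) a is the join of its join irreducible components *)
  (forall a : L, is_lub (fun _ => True) (@Lle _ L) (ji_component a) a).
Proof.
split.
  split; first by move=> x; split; [exact: part1a_r | exact: part1a_l].
  exact: part1b.
split; first exact: cji_of_ji.
split; first exact: part3.
split; first exact: part4.
exact: part5.
Qed.
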